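(* Let $d$ and $k$ be positive integers and let $p$ be the smallest positive integer such that $k<\kappa_p$. If $d$ is a proper divisor of $p$ (that is, $d$ divides $p$ and $d\ne p$) and either (i) $k-\kappa_{p-1}=p/d$, or (ii) $\kappa_p-k=p/d$, then $\delta_z(d,k)\neq\lfloor\lambda(d,k)\rfloor$.
   Context: A point of $\mathbb{Z}^d$ is primitive if its coordinates are relatively prime; $\mathbb{P}^d_\circ$ denotes the set of primitive points of $\mathbb{Z}^d$ whose first non-zero coordinate is positive. For a finite $\mathcal{X}\subset\mathbb{R}^d$, $\kappa(\mathcal{X})=\max_{1\le i\le d}\sum_{x\in\mathcal{X}}|x_i|$, and $\delta_z(d,k)=\max\{|\mathcal{X}|:\mathcal{X}\subset\mathbb{P}^d_\circ,\ \kappa(\mathcal{X})\le k\}$. $B(d,p)=\{x\in\mathbb{R}^d:\|x\|_1\le p\}$; for integers $p\ge0$, $N_p=|B(d,p)\cap\mathbb{P}^d_\circ|$ and $\kappa_p=\kappa(B(d,p)\cap\mathbb{P}^d_\circ)$ (so $N_0=\kappa_0=0$). With $p$ as in the claim, $\lambda(d,k)=N_{p-1}+\frac{d(k-\kappa_{p-1})}{p}$. *)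

(* Defs.v *)
From HB Require Import structures.
From mathcomp Require Import all_boot all_order all_algebra.
Set Implicit Arguments. Unset Strict Implicit. Unset Printing Implicit Defensive.
Import Order.TTheory GRing.Theory Num.Theory.
Local Open Scope int_scope.

Notation pt d := {ffun 'I_d -> int}.

Definition primitive d (x : pt d) : bool :=
  \big[gcdn/0%N]_(i < d) `|x i|%N == 1%N.

Definition first_nz_pos d (x : pt d) : bool :=
  [exists i : 'I_d, (0 < x i)%R && [forall j : 'I_d, (j < i)%N ==> (x j == 0)]].

Definition in_Pdo d (x : pt d) : bool := primitive x && first_nz_pos x.

Definition l1 d (x : pt d) : nat := \sum_(i < d) `|x i|%N.

(* kappa(X) = max_i sum_{x in X} |x_i|, for a finite set X given as a uniq seq *)
Definition kappa d (X : seq (pt d)) : nat :=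
  \max_(i < d) \sum_(x <- X) `|x i|%N.

(* All points of Z^d with coordinates in [-p, p] (a superset of B(d,p) cap Z^d). *)
Definition box d (p : nat) : seq (pt d) :=
  [seq [ffun i => ((f i)%:Z - p%:Z)%R] | f : {ffun 'I_d -> 'I_(p.*2.+1)}].

Definition ball_prim d (p : nat) : seq (pt d) :=
  [seq x <- box d p | in_Pdo x && (l1 x <= p)%N].

Definition N_ d (p : nat) : nat := size (ball_prim d p).
Definition kappa_ d (p : nat) : nat := kappa (ball_prim d p).

Definition admissible d (k : nat) (X : seq (pt d)) : Prop :=
  uniq X /\ all (@in_Pdo d) X /\ (kappa X <= k)%N.

Definition is_delta_z (d k m : nat) : Prop :=
  (exists X, admissible (d:=d) k X /\ size X = m) /\
  (forall X, admissible (d:=d) k X -> (size X <= m)%N).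

Definition lambda (d k p : nat) : rat :=
  ((N_ d p.-1)%:R + (d%:R * (k%:R - (kappa_ d p.-1)%:R)) / p%:R)%R.

(* Main.v *)
Require Import Defs.
From mathcomp Require Import all_boot all_order all_algebra.
From mathcomp Require Import fingroup perm zify ring lra.
From Stdlib Require Classical_Prop.
Import Order.TTheory GRing.Theory Num.Theory.
Set Implicit Arguments. Unset Strict Implicit. Unset Printing Implicit Defensive.

Lemma abs_le_l1 d (x : pt d) i : (`|x i| <= l1 x)%N.
Proof. by rewrite /l1 (bigD1 i) //= leq_addr. Qed.

Lemma mem_box d q (x : pt d) : (l1 x <= q)%N -> x \in box d q.
Proof.
move=> hx.
pose f : {ffun 'I_d -> 'I_(q.*2.+1)} := [ffun i => inord `|(x i + q%:Z)%R|%N].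
have -> : x = [ffun i => ((f i)%:Z - q%:Z)%R].
  apply/ffunP => i; rewrite !ffunE.
  have h := leq_trans (abs_le_l1 x i) hx.
  rewrite inordK; last by lia.
  have hp : (0 <= x i + q%:Z)%R by lia.
  by rewrite abszE ger0_norm // addrK.
by apply: image_f.
Qed.

Lemma box_uniq d q : uniq (box d q).
Proof.
rewrite /box /image_mem map_inj_uniq ?enum_uniq // => f g /ffunP H.
apply/ffunP => i; move: (H i); rewrite !ffunE => h.
apply: val_inj => /=; lia.
Qed.

Lemma mem_ball d q (x : pt d) : (x \in ball_prim d q) = in_Pdo x && (l1 x <= q)%N.
Proof.
rewrite /ball_prim mem_filter; case: (in_Pdo x && _) /andP => //= [[_ h]].
exact: mem_box.
Qed.

Lemma ball_uniq d q : uniq (ball_prim d q).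
Proof. by rewrite filter_uniq ?box_uniq. Qed.
Definition negp d (x : pt d) : pt d := [ffun t => (- x t)%R].
Definition swp d (i j : 'I_d) (x : pt d) : pt d := [ffun t => x (tperm i j t)].
Definition nrm d (x : pt d) : pt d := if first_nz_pos x then x else negp x.
Definition fsym d (i j : 'I_d) (x : pt d) : pt d := nrm (swp i j x).

Lemma fnzP d (x : pt d) :
  reflect (exists i, (0 < x i)%R /\ forall j : 'I_d, (j < i)%N -> x j = 0%R)
          (first_nz_pos x).
Proof.
apply: (iffP existsP) => [[i /andP [hi /forallP hj]] | [i [hi hj]]].
  by exists i; split => // j hji; move: (hj j); rewrite hji => /eqP.
exists i; rewrite hi /=; apply/forallP => j; apply/implyP => hji.
by rewrite hj.
Qed.

Lemma fnz_not_both d (x : pt d) : first_nz_pos x -> ~~ first_nz_pos (negp x).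
Proof.
move=> /fnzP [i [hi hj]]; apply/negP => /fnzP [i' [hi' hj']].
move: hi'; rewrite ffunE oppr_gt0 => hi'.
case: (ltngtP i i') => h.
- by move: (hj' i h); rewrite ffunE => /eqP; rewrite oppr_eq0 => /eqP e; move: hi; rewrite e ltxx.
- by move: (hj i' h) => e; move: hi'; rewrite e ltxx.
- have e : i = i' by apply: val_inj.
  by subst i'; move: (lt_trans hi hi'); rewrite ltxx.
Qed.

Lemma fnz_either d (x : pt d) (t : 'I_d) : x t != 0%R ->
  first_nz_pos x || first_nz_pos (negp x).
Proof.
move=> ht.
case: (@arg_minnP _ t (fun s : 'I_d => x s != 0%R) (fun s : 'I_d => nat_of_ord s) ht) => i hi hmin.
have hz : forall j : 'I_d, (j < i)%N -> x j = 0%R.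
  move=> j hj; apply/eqP; apply: contraTT hj => hj.
  by rewrite -leqNgt hmin.
case: (ltgtP (x i) 0%R) => h.
- apply/orP; right; apply/fnzP; exists i; split; first by rewrite ffunE oppr_gt0.
  by move=> j hj; rewrite ffunE hz // oppr0.
- by apply/orP; left; apply/fnzP; exists i.
- by move: hi; rewrite h eqxx.
Qed.

Lemma prim_nz d (x : pt d) : primitive x -> exists t, x t != 0%R.
Proof.
move=> hp; apply/existsP; apply: contraLR hp => /existsPn h.
rewrite /primitive big1 // => t _; move: (h t); rewrite negbK => /eqP ->; done.
Qed.

Lemma l1_swp d i j (x : pt d) : l1 (swp i j x) = l1 x.
Proof.
rewrite /l1 (reindex_inj (@perm_inj _ (tperm i j))) /=.
by apply: eq_bigr => t _; rewrite ffunE tpermK.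
Qed.

Lemma prim_swp d i j (x : pt d) : primitive (swp i j x) = primitive x.
Proof.
rewrite /primitive (reindex_inj (@perm_inj _ (tperm i j))) /=.
by congr (_ == _); apply: eq_bigr => t _; rewrite ffunE tpermK.
Qed.

Lemma abs_nrm d (x : pt d) t : `|nrm x t|%N = `|x t|%N.
Proof. by rewrite /nrm; case: ifP => // _; rewrite ffunE abszN. Qed.

Lemma l1_nrm d (x : pt d) : l1 (nrm x) = l1 x.
Proof. by rewrite /l1; apply: eq_bigr => t _; rewrite abs_nrm. Qed.

Lemma prim_nrm d (x : pt d) : primitive (nrm x) = primitive x.
Proof. by rewrite /primitive; congr (_ == _); apply: eq_bigr => t _; rewrite abs_nrm. Qed.

Lemma fnz_nrm d (x : pt d) : primitive x -> first_nz_pos (nrm x).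
Proof.
move=> /prim_nz [t ht]; rewrite /nrm; case: ifP => // h.
by move: (fnz_either ht); rewrite h.
Qed.

Lemma fsym_P d i j (x : pt d) : in_Pdo x -> in_Pdo (fsym i j x).
Proof.
move=> /andP [hp _]; rewrite /in_Pdo /fsym prim_nrm prim_swp hp /=.
by apply: fnz_nrm; rewrite prim_swp.
Qed.

Lemma l1_fsym d i j (x : pt d) : l1 (fsym i j x) = l1 x.
Proof. by rewrite /fsym l1_nrm l1_swp. Qed.

Lemma abs_fsym d i j (x : pt d) t : `|fsym i j x t|%N = `|x (tperm i j t)|%N.
Proof. by rewrite /fsym abs_nrm ffunE. Qed.

Lemma negpK d (x : pt d) : negp (negp x) = x.
Proof. by apply/ffunP => t; rewrite !ffunE opprK. Qed.

Lemma swp_negp d i j (x : pt d) : swp i j (negp x) = negp (swp i j x).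
Proof. by apply/ffunP => t; rewrite !ffunE. Qed.

Lemma swpK d i j (x : pt d) : swp i j (swp i j x) = x.
Proof. by apply/ffunP => t; rewrite !ffunE tpermK. Qed.

Lemma fsym_inj d i j (x y : pt d) : in_Pdo x -> in_Pdo y ->
  fsym i j x = fsym i j y -> x = y.
Proof.
move=> /andP [_ hx] /andP [_ hy]; rewrite /fsym /nrm.
have key : forall a b : pt d, first_nz_pos a -> first_nz_pos b ->
    swp i j a = negp (swp i j b) -> False.
  move=> a b ha hb e.
  have : a = negp b by rewrite -(swpK i j a) e -swp_negp swpK.
  by move=> ea; move: (fnz_not_both hb); rewrite -ea ha.
case: ifP => h1; case: ifP => h2 e.
- by rewrite -(swpK i j x) e swpK.
- by case: (key x y hx hy e).
- by case: (key y x hy hx (esym e)).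
- by rewrite -(swpK i j x) -(negpK (swp i j x)) e negpK swpK.
Qed.

Definition colsum d (X : seq (pt d)) (i : 'I_d) : nat := \sum_(x <- X) `|x i|%N.

Lemma ball_perm d q (i j : 'I_d) :
  perm_eq (map (fsym i j) (ball_prim d q)) (ball_prim d q).
Proof.
have U := ball_uniq d q.
have Um : uniq (map (fsym i j) (ball_prim d q)).
  rewrite map_inj_in_uniq // => x y hx hy; apply: fsym_inj.
  - by move: hx; rewrite mem_ball => /andP [].
  - by move: hy; rewrite mem_ball => /andP [].
have sub : {subset map (fsym i j) (ball_prim d q) <= ball_prim d q}.
  move=> y /mapP [x hx ->]; move: hx; rewrite !mem_ball => /andP [h1 h2].
  by rewrite fsym_P // l1_fsym.
have [_ E] := uniq_min_size Um sub (eq_leq (esym (size_map _ _))).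
exact: uniq_perm.
Qed.

Lemma colsum_sym d q (i j : 'I_d) : colsum (ball_prim d q) i = colsum (ball_prim d q) j.
Proof.
rewrite /colsum -(perm_big _ (ball_perm q j i)) big_map.
by apply: eq_bigr => x _; rewrite abs_fsym tpermR.
Qed.

Lemma kappa_col d q (i : 'I_d) : kappa_ d q = colsum (ball_prim d q) i.
Proof.
rewrite /kappa_ /kappa.
rewrite (eq_bigr (fun _ => colsum (ball_prim d q) i)); last first.
  by move=> j _; rewrite -/(colsum _ j) (colsum_sym q j i).
rewrite big_const_ord.
have : (0 < d)%N by case: i => i /= h; lia.
move: (colsum (ball_prim d q) i) => c; clear i.
case: d => // n _; elim: n => [|n IH]; first by rewrite /= maxn0.
by rewrite iterS IH maxnn.
Qed.

Lemma sum_l1 d (X : seq (pt d)) : \sum_(x <- X) l1 x = \sum_(i < d) colsum X i.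
Proof. by rewrite /l1 /colsum exchange_big. Qed.

Lemma sum_l1_ball d q : (0 < d)%N -> \sum_(x <- ball_prim d q) l1 x = d * kappa_ d q.
Proof.
case: d => // n _; rewrite sum_l1 (eq_bigr (fun _ => kappa_ n.+1 q)).
  by rewrite sum_nat_const card_ord.
by move=> i _; rewrite (kappa_col q i).
Qed.

Lemma col_le_kappa d (X : seq (pt d)) i : (colsum X i <= kappa X)%N.
Proof. rewrite /kappa /colsum. exact: (@leq_bigmax _ (fun j : 'I_d => \sum_(x <- X) `|x j|%N) i). Qed.

Lemma sum_l1_le d (X : seq (pt d)) : (\sum_(x <- X) l1 x <= d * kappa X)%N.
Proof.
rewrite sum_l1 -[X in (_ <= X * _)%N]card_ord -sum_nat_const.
by apply: leq_sum => i _; apply: col_le_kappa.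
Qed.

Lemma sum_eq_all n (c : 'I_n -> nat) k :
  (forall i, c i <= k)%N -> \sum_(i < n) c i = n * k -> forall i, c i = k.
Proof.
move=> hc hs i; apply/eqP; rewrite eqn_leq hc /=; apply/negP => /negP; rewrite -ltnNge => hlt.
move: hs; rewrite (bigD1 i) //=.
have : (\sum_(j | j != i) c j <= \sum_(j | j != i) k)%N by apply: leq_sum.
rewrite sum_nat_const cardC1 card_ord.
case: n c hc i hlt => [|n] c hc i; first by case: i.
move=> hlt /= h1 h2. nia.
Qed.

Lemma col_all d (X : seq (pt d)) k : (kappa X <= k)%N ->
  \sum_(x <- X) l1 x = d * k -> forall i, colsum X i = k.
Proof.
move=> hk hs; apply: sum_eq_all; last by rewrite -sum_l1.
by move=> i; apply: leq_trans (col_le_kappa X i) hk.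
Qed.

Lemma split_X d (X B : seq (pt d)) (F : pt d -> nat) :
  \sum_(x <- X) F x = \sum_(x <- [seq x <- X | x \in B]) F x + \sum_(x <- [seq x <- X | x \notin B]) F x.
Proof.
rewrite -big_cat; apply: perm_big; rewrite perm_sym.
by apply/permPl; apply: (perm_filterC (mem B) X).
Qed.

Lemma split_B d (X B : seq (pt d)) (F : pt d -> nat) : uniq X -> uniq B ->
  \sum_(x <- B) F x = \sum_(x <- [seq x <- X | x \in B]) F x + \sum_(x <- [seq x <- B | x \notin X]) F x.
Proof.
move=> UX UB; rewrite (split_X B X F); congr (_ + _); apply: perm_big.
apply: uniq_perm; rewrite ?filter_uniq // => x; rewrite !mem_filter andbC.
done.
Qed.

Lemma sum_lb (T : eqType) (s : seq T) (F : T -> nat) c :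
  (forall x, x \in s -> c <= F x)%N -> (c * size s <= \sum_(x <- s) F x)%N.
Proof.
elim: s => [|a s IH] h; first by rewrite big_nil muln0.
rewrite big_cons /= mulnS leq_add ?h ?mem_head // IH // => x hx.
by rewrite h // in_cons hx orbT.
Qed.

Lemma sum_ub (T : eqType) (s : seq T) (F : T -> nat) c :
  (forall x, x \in s -> F x <= c)%N -> (\sum_(x <- s) F x <= c * size s)%N.
Proof.
elim: s => [|a s IH] h; first by rewrite big_nil.
rewrite big_cons /= mulnS leq_add ?h ?mem_head // IH // => x hx.
by rewrite h // in_cons hx orbT.
Qed.

Lemma prim_const d (y : pt d) c : (0 < d)%N -> (forall i, `|y i|%N = c) -> primitive y -> c = 1%N.
Proof.
move=> hd hy; rewrite /primitive (eq_bigr (fun _ => c)) ?big_const_ord; last by move=> i _; rewrite hy.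
have e : forall n, iter n.+1 (gcdn c) 0%N = c.
  elim=> [|n IH]; first by rewrite /= gcdn0.
  by rewrite iterS IH gcdnn.
by case: d hd {y hy} => // n _; rewrite e => /eqP.
Qed.

Lemma max_exists (P : nat -> Prop) b : P 0%N -> (forall n, P n -> n <= b)%N ->
  exists m, P m /\ forall n, P n -> (n <= m)%N.
Proof.
elim: b => [|b IH] h0 hb; first by exists 0%N; split => // n /hb.
case: (Classical_Prop.classic (P b.+1)) => H; first by exists b.+1.
apply: IH => // n hn; have := hb n hn; rewrite leq_eqVlt => /orP [/eqP e|//].
by subst n.
Qed.

Lemma bound_i d k p (X : seq (pt d)) : (0 < d)%N -> (0 < p)%N ->
  d * k = d * kappa_ d p.-1 + p -> d != p -> admissible k X -> (size X <= N_ d p.-1)%N.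
Proof.
move=> hd hp hk hne [UX [AX KX]].
have UB := ball_uniq d p.-1.
set B := ball_prim d p.-1 in UB *.
rewrite leqNgt; apply/negP => hsz.
have sX := split_X X B (@l1 d).
have sB := split_B (@l1 d) UX UB.
have zX := split_X X B (fun _ => 1%N).
have zB := split_B (fun _ => 1%N) UX UB.
rewrite !sum1_size in zX zB.
set C := [seq x <- X | x \in B] in sX sB zX zB.
set XB := [seq x <- X | x \notin B] in sX zX.
set BX := [seq x <- B | x \notin X] in sB zB.
have lXB : (p * size XB <= \sum_(x <- XB) l1 x)%N.
  apply: sum_lb => x; rewrite mem_filter => /andP [hxB hxX].
  move: hxB; rewrite /B mem_ball (allP AX x hxX) /= -ltnNge; lia.
have uBX : (\sum_(x <- BX) l1 x <= p.-1 * size BX)%N.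
  apply: sum_ub => x; rewrite mem_filter => /andP [_ hxB].
  by move: hxB; rewrite /B mem_ball => /andP [].
have SB : \sum_(x <- B) l1 x = d * kappa_ d p.-1 by rewrite sum_l1_ball.
have SX : (\sum_(x <- X) l1 x <= d * k)%N.
  by apply: leq_trans (sum_l1_le X) _; rewrite leq_mul2l KX orbT.
rewrite /N_ -/B in hsz.
have hpu : (p * (size BX).+1 <= p * size XB)%N by rewrite leq_mul2l; apply/orP; right; lia.
have hv : size BX = 0%N by nia.
have hu : size XB = 1%N by nia.
have hS : \sum_(x <- X) l1 x = d * k.
  have : (\sum_(x <- BX) l1 x = 0)%N by lia.
  nia.
have [y EXB] : exists y, XB = [:: y] by move: hu; rewrite /XB; case: (filter _ _) => [|y [|]] // _; by exists y.
have EBX : BX = [::] by apply: size0nil.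
have yX : y \in X.
  have : y \in XB by rewrite EXB mem_head.
  by rewrite mem_filter => /andP [].
have hcol : forall i, `|y i|%N = (k - kappa_ d p.-1)%N.
  move=> i.
  have h1 := col_all KX hS i.
  have h2 := kappa_col p.-1 i.
  rewrite /colsum in h1 h2.
  rewrite (split_X X B (fun x => `|x i|%N)) -/C -/XB EXB big_cons big_nil in h1.
  rewrite -/B (split_B (fun x => `|x i|%N) UX UB) -/C -/BX EBX big_nil in h2.
  by rewrite h2 -h1 !addn0 addKn.
have hc := prim_const hd hcol (proj1 (andP (allP AX y yX))).
move/eqP: hne; apply; move: hk hc; nia.
Qed.

Lemma bound_ii d k p (X : seq (pt d)) : (0 < d)%N -> (0 < p)%N ->
  d * k + p = d * kappa_ d p -> d != p -> admissible k X -> (size X + 2 <= N_ d p)%N.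
Proof.
move=> hd hp hk hne [UX [AX KX]].
have UB := ball_uniq d p.
set B := ball_prim d p in UB *.
rewrite leqNgt; apply/negP => hsz.
have sX := split_X X B (@l1 d).
have sB := split_B (@l1 d) UX UB.
have zX := split_X X B (fun _ => 1%N).
have zB := split_B (fun _ => 1%N) UX UB.
rewrite !sum1_size in zX zB.
set C := [seq x <- X | x \in B] in sX sB zX zB.
set XB := [seq x <- X | x \notin B] in sX zX.
set BX := [seq x <- B | x \notin X] in sB zB.
have lXB : (p.+1 * size XB <= \sum_(x <- XB) l1 x)%N.
  apply: sum_lb => x; rewrite mem_filter => /andP [hxB hxX].
  move: hxB; rewrite /B mem_ball (allP AX x hxX) /= -ltnNge; lia.
have uBX : (\sum_(x <- BX) l1 x <= p * size BX)%N.
  apply: sum_ub => x; rewrite mem_filter => /andP [_ hxB].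
  by move: hxB; rewrite /B mem_ball => /andP [].
have SB : \sum_(x <- B) l1 x = d * kappa_ d p by rewrite sum_l1_ball.
have SX : (\sum_(x <- X) l1 x <= d * k)%N.
  by apply: leq_trans (sum_l1_le X) _; rewrite leq_mul2l KX orbT.
rewrite /N_ -/B in hsz.
have hpu : (p * size BX <= p * (size XB).+1)%N by rewrite leq_mul2l; apply/orP; right; lia.
have hu : size XB = 0%N by nia.
have hv : size BX = 1%N by nia.
have hS : \sum_(x <- X) l1 x = d * k by nia.
have [y EBX] : exists y, BX = [:: y] by move: hv; rewrite /BX; case: (filter _ _) => [|y [|]] // _; by exists y.
have EXB : XB = [::] by apply: size0nil.
have yB : y \in B.
  have : y \in BX by rewrite EBX mem_head.
  by rewrite mem_filter => /andP [].
have hcol : forall i, `|y i|%N = (kappa_ d p - k)%N.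
  move=> i.
  have h1 := col_all KX hS i.
  have h2 := kappa_col p i.
  rewrite /colsum in h1 h2.
  rewrite (split_X X B (fun x => `|x i|%N)) -/C -/XB EXB big_nil in h1.
  rewrite -/B (split_B (fun x => `|x i|%N) UX UB) -/C -/BX EBX big_cons big_nil in h2.
  by rewrite h2 -h1 !addn0 addKn.
have yP : primitive y by move: yB; rewrite /B mem_ball => /andP [/andP []].
have hc := prim_const hd hcol yP.
move/eqP: hne; apply; move: hk hc; nia.
Qed.

Lemma mid d p : (0 < p)%N -> exists M, N_ d p = (N_ d p.-1 + M)%N /\
  \sum_(x <- ball_prim d p) l1 x = (\sum_(x <- ball_prim d p.-1) l1 x + p * M)%N.
Proof.
move=> hp.
have U1 := ball_uniq d p.-1; have U := ball_uniq d p.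
have E : [seq x <- ball_prim d p.-1 | x \in ball_prim d p] = ball_prim d p.-1.
  apply/all_filterP; apply/allP => x; rewrite !mem_ball => /andP [-> h] /=; lia.
have s1 := split_B (@l1 d) U1 U; have s2 := split_B (fun _ => 1%N) U1 U.
rewrite E in s1 s2; rewrite !sum1_size in s2.
exists (size [seq x <- ball_prim d p | x \notin ball_prim d p.-1]); split; first exact: s2.
rewrite s1; congr (_ + _)%N; apply/eqP; rewrite eqn_leq; apply/andP; split.
  by apply: sum_ub => x; rewrite mem_filter !mem_ball => /andP [_ /andP [_ ->]].
apply: sum_lb => x; rewrite mem_filter !mem_ball => /andP [].
by case: (in_Pdo x) => //=; lia.
Qed.

Lemma adm_nil d k : admissible (d:=d) k [::].
Proof.
split => //; split => //; apply/bigmax_leqP => i _; by rewrite big_nil.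
Qed.

Lemma floor_ne (m : nat) (l : rat) : ((m.+1)%:R <= l)%R -> (Posz m != Num.floor l)%R.
Proof.
move=> h; apply/eqP => E.
have : (Posz m.+1 <= Num.floor l)%R by rewrite floor_ge_int.
rewrite -E; lia.
Qed.

Theorem lemma3p2 (d k p : nat) :
  (0 < d)%N -> (0 < k)%N ->
  (0 < p)%N -> (k < kappa_ d p)%N ->
  (forall q : nat, (0 < q)%N -> (q < p)%N -> (kappa_ d q <= k)%N) ->
  (d %| p)%N -> d != p ->
  ((k%:R - (kappa_ d p.-1)%:R = p%:R / d%:R :> rat)%R \/
   ((kappa_ d p)%:R - k%:R = p%:R / d%:R :> rat)%R) ->
  exists m : nat, is_delta_z d k m /\ (Posz m != Num.floor (lambda d k p))%R.
Proof.
move=> hd hk0 hp hkp hmin hdiv hne hcase.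
have hd0 : (d%:R : rat) != 0%R by rewrite pnatr_eq0 -lt0n.
have hp0 : (p%:R : rat) != 0%R by rewrite pnatr_eq0 -lt0n.
pose P := fun n => exists X, admissible (d:=d) k X /\ size X = n.
have mk : forall b, (forall X, admissible (d:=d) k X -> (size X <= b)%N) ->
    exists m, is_delta_z d k m /\ (m <= b)%N.
  move=> b hb.
  have [|n [X [hX <-]]|m [[X [hX hXs]] hmax]] := @max_exists P b.
  - by exists [::]; split => //; apply: adm_nil.
  - exact: hb.
  exists m; split; last by rewrite -hXs; apply: hb.
  by split; [exists X | move=> Y hY; apply: hmax; exists Y].
case: hcase => h.
- have hk : d * k = d * kappa_ d p.-1 + p.
    apply/eqP; rewrite -(eqr_nat rat) natrD !natrM; apply/eqP.
    have -> : (k%:R = (kappa_ d p.-1)%:R + p%:R / d%:R :> rat)%R by rewrite -h addrC subrK.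
    by field.
  have [m [hm hmb]] := mk _ (fun X => bound_i hd hp hk hne).
  exists m; split => //; apply: floor_ne.
  rewrite /lambda h.
  have -> : (d%:R * (p%:R / d%:R) / p%:R = 1 :> rat)%R by field; apply/andP.
  by rewrite -natr1 lerD2r ler_nat.
- have hk : d * k + p = d * kappa_ d p.
    apply/eqP; rewrite -(eqr_nat rat) natrD !natrM; apply/eqP.
    have -> : ((kappa_ d p)%:R = k%:R + p%:R / d%:R :> rat)%R by rewrite -h addrC subrK.
    by field.
  have h2 := bound_ii hd hp hk hne (adm_nil d k).
  have [m [hm hmb]] := mk (N_ d p - 2)%N (fun X hX => ltac:(have := bound_ii hd hp hk hne hX; lia)).
  exists m; split => //; apply: floor_ne.
  have [M [hN hS]] := mid d hp.
  rewrite !sum_l1_ball // in hS.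
  have e : d * k + p = d * kappa_ d p.-1 + p * M by rewrite hk hS.
  have er : (d%:R * k%:R + p%:R = d%:R * (kappa_ d p.-1)%:R + p%:R * M%:R :> rat)%R.
    by rewrite -!natrM -!natrD e.
  have e2 : (d%:R * (k%:R - (kappa_ d p.-1)%:R) / p%:R = M%:R - 1 :> rat)%R.
    have -> : (d%:R * (k%:R - (kappa_ d p.-1)%:R) = p%:R * (M%:R - 1) :> rat)%R.
      by rewrite mulrBr mulrBr mulr1; lra.
    by field.
  rewrite /lambda e2.
  have H : ((m + 2)%:R <= (N_ d p.-1 + M)%:R :> rat)%R by rewrite ler_nat -hN; lia.
  rewrite !natrD in H.
  rewrite -natr1; lra.
Qed.
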